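(* Let $k\ge1$, $n\ge0$, $j\ge0$ be integers. The number of $k$-Dyck prefixes with exactly $n+1$ up-steps, whose last step is an up-step, and which end at height $j+k$, equals $$\sum_{0\le m\le j/k}(-1)^m\binom{j-km}{m}\frac1{1+(n-m)(k+1)}\binom{1+(n-m)(k+1)}{n-m}\;-\;(-1)^n\binom{j-1-kn}{n}.$$
   Context: A $k$-Dyck prefix is a lattice path starting at $(0,0)$ with up-steps $(1,k)$ and down-steps $(1,-1)$ that never goes below the $x$-axis; the height of a point is its $y$-coordinate. Binomial conventions: $\binom{a}{b}=0$ if $b<0$; for $a\ge0$, $\binom{a}{b}=0$ if $b>a$; and the term $\binom{j-1-kn}{n}$ is taken to be $0$ when $j-1-kn<0$ (it is the coefficient of $z^nu^{j-1}$ in $1/(1-u+zu^{k+1})$). *)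

(* Defs.v *)
From HB Require Import structures.
From mathcomp Require Import all_boot all_order all_algebra.
Set Implicit Arguments. Unset Strict Implicit. Unset Printing Implicit Defensive.
Import Order.TTheory GRing.Theory Num.Theory.
Local Open Scope ring_scope.

Definition height (k : nat) (s : seq bool) : int :=
  \sum_(b <- s) (if b then k%:Z else -1).

Definition is_kDyck_prefix (k : nat) (s : seq bool) : bool :=
  [forall i : 'I_(size s).+1, 0 <= height k (take i s)].

Definition good_path (k n j : nat) (s : seq bool) : bool :=
  [&& is_kDyck_prefix k s,
      count id s == n.+1,
      last false s &
      height k s == (j + k)%:Z].

(* Any such path has n+1 up-steps and at most
   k(n+1) down-steps (height stays >= 0), hence length < (k+1)(n+1)+1;
   we count over all bool sequences of each length below that bound. *)
Definition num_good_paths (k n j : nat) : nat :=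
  (\sum_(m < (k.+1 * n.+1).+1)
     #|[set t : m.-tuple bool | good_path k n j t]|)%N.

(* Binomial coefficient with integer arguments (as a rational), following the
   paper's conventions: 0 if b < 0; 'C(a,b) if a >= 0 (which is 0 if b > a);
   and 0 if a < 0 (the only instance with a < 0 in the statement is the term
   binom(j-1-kn, n), which the paper takes to be 0 when j-1-kn < 0). *)
Definition binz (a b : int) : rat :=
  if b < 0 then 0
  else if a < 0 then 0
  else ('C(`|a|%N, `|b|%N))%:R.

(* Main.v *)
Require Import Defs.
From HB Require Import structures.
From mathcomp Require Import all_boot all_order all_algebra.
From mathcomp Require Import zify ring lra.
Import Order.TTheory GRing.Theory Num.Theory.
Local Open Scope ring_scope.

Section Comb.
Variable k : nat.

Definition stp (b : bool) : int := if b then k%:Z else -1.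

Lemma height_cons b s : height k (b :: s) = stp b + height k s.
Proof. by rewrite /height big_cons. Qed.

Lemma height_nil : height k [::] = 0.
Proof. by rewrite /height big_nil. Qed.

Lemma height_rcons s b : height k (rcons s b) = height k s + stp b.
Proof. by rewrite /height -cats1 big_cat /= big_cons big_nil addr0. Qed.

Fixpoint dyckr (c : int) (s : seq bool) : bool :=
  match s with
  | [::] => 0 <= c
  | b :: s' => (0 <= c) && dyckr (c + stp b) s'
  end.

Lemma dyckr_all c s : dyckr c s =
  all (fun i => 0 <= c + height k (take i s)) (iota 0 (size s).+1).
Proof.
elim: s c => [|b s IH] c; first by rewrite /= height_nil addr0 andbT.
have E : iota 0 (size (b :: s)).+1 = [:: 0%N] ++ map (addn 1) (iota 0 (size s).+1).
  by rewrite -iotaDl.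
rewrite [dyckr _ _]/= IH E all_cat all_map; congr (_ && _).
  by rewrite /= height_nil addr0 andbT.
by apply: eq_all => i /=; rewrite height_cons addrA.
Qed.

Lemma forall_iota n (P : nat -> bool) :
  [forall i : 'I_n, P i] = all P (iota 0 n).
Proof.
apply/forallP/allP => H i.
  by rewrite mem_iota add0n => Hi; exact: (H (Ordinal Hi)).
by apply: H; rewrite mem_iota add0n ltn_ord.
Qed.

Lemma dyck_prefixE s : is_kDyck_prefix k s = dyckr 0 s.
Proof.
rewrite /is_kDyck_prefix dyckr_all (forall_iota _ (fun i => 0 <= height k (take i s))); apply: eq_all => i.
by rewrite add0r.
Qed.

Lemma dyckr_rcons c s b :
  dyckr c (rcons s b) = dyckr c s && (0 <= c + height k (rcons s b)).
Proof.
elim: s c => [|a s IH] c /=.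
  by rewrite height_cons height_nil addr0.
by rewrite IH height_cons height_rcons andbA !addrA.
Qed.

Lemma cons_injr (T : Type) (b : T) : injective (cons b).
Proof. by move=> x y [].
Qed.

Fixpoint allseqs (m : nat) : seq (seq bool) :=
  if m is m'.+1 then map (cons true) (allseqs m') ++ map (cons false) (allseqs m')
  else [:: [::]].

Lemma mem_allseqs m s : (s \in allseqs m) = (size s == m).
Proof.
elim: m s => [|m IH] s; first by case: s => [|b s]; rewrite inE.
rewrite /= mem_cat; case: s => [|b s].
  by apply/orP; case=> /mapP [t _].
rewrite /= eqSS -IH; case: b.
  rewrite (mem_map (@cons_injr _ true)).
  by case: (s \in allseqs m) => //=; apply/negbTE/negP => /mapP [t _].
rewrite (mem_map (@cons_injr _ false)) orbC.
by case: (s \in allseqs m) => //=; apply/negbTE/negP => /mapP [t _].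
Qed.

Lemma uniq_allseqs m : uniq (allseqs m).
Proof.
elim: m => [|m IH] //=.
rewrite cat_uniq !map_inj_uniq //; try exact: cons_injr.
rewrite IH /= andbT; apply/hasPn => s /mapP [t _ ->]; apply/negP => /mapP [u _].
done.
Qed.

Definition rallseqs m :=
  map (rcons^~ true) (allseqs m) ++ map (rcons^~ false) (allseqs m).

Lemma perm_rall m : perm_eq (allseqs m.+1) (rallseqs m).
Proof.
apply: uniq_perm.
- exact: uniq_allseqs.
- rewrite cat_uniq !map_inj_uniq ?uniq_allseqs //; try exact: rcons_injl.
  rewrite /= andbT; apply/hasPn => s /mapP [t _ ->]; apply/negP => /mapP [u _].
  by move/(congr1 (last false)); rewrite !last_rcons.
move=> s; rewrite mem_allseqs mem_cat.
apply/idP/idP.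
- case/lastP: s => [|s b] //; rewrite size_rcons eqSS => Hs.
  case: b; [apply/orP; left | apply/orP; right];
  by apply/mapP; exists s => //; rewrite mem_allseqs.
- by case/orP => /mapP [t]; rewrite mem_allseqs => /eqP <- ->; rewrite size_rcons.
Qed.

Lemma card_tuples m (P : pred (seq bool)) :
  #|[set t : m.-tuple bool | P t]| = count P (allseqs m).
Proof.
rewrite cardsE cardE /enum_mem -enumT size_filter.
have -> : count P (allseqs m) = count P (map val (enum {: m.-tuple bool})).
  suff /permP Hp : perm_eq (allseqs m) (map val (enum {: m.-tuple bool})) by exact: Hp.
  apply: uniq_perm.
  - exact: uniq_allseqs.
  - by rewrite map_inj_uniq ?enum_uniq //; exact: val_inj.
  move=> s; rewrite mem_allseqs.
case Hs: (size s == m); apply/esym.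
    have -> : s = val (Tuple Hs) by [].
    by apply: map_f; rewrite mem_enum.
  by apply/negbTE/negP; case/mapP=> t _ Ht; move: Hs; rewrite Ht size_tuple eqxx.
by rewrite [in RHS]count_map; apply: eq_count => t; rewrite !inE.
Qed.


Definition Pc (c : int) (u : nat) (e : int) (s : seq bool) : bool :=
  [&& dyckr c s, count id s == u & height k s == e].

Definition G c m u e : nat := count (Pc c u e) (allseqs m).

Lemma G0 c u e : G c 0 u e = [&& 0 <= c, u == 0%N & e == 0] :> nat.
Proof. by rewrite /G /= /Pc /= height_nil addn0 (eq_sym 0%N) (eq_sym (0:int)). Qed.

Lemma eq_addl (a b e : int) : (a + b == e) = (b == e - a).
Proof. by apply/eqP/eqP => H; lia. Qed.

Lemma eq_addr (a b e : int) : (b + a == e) = (b == e - a).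
Proof. by apply/eqP/eqP => H; lia. Qed.

Lemma count_pred0' (T : Type) (p : pred T) s : p =1 pred0 -> count p s = 0%N.
Proof. by move=> H; rewrite (eq_count H) count_pred0. Qed.

Lemma count_map' (T1 T2 : Type) (f : T1 -> T2) (p : pred T2) s :
  count p (map f s) = count (fun x => p (f x)) s.
Proof. by rewrite count_map. Qed.

Lemma Gfirst c m u e : G c m.+1 u e =
  if 0 <= c then
    ((if u is u'.+1 then G (c + k%:Z) m u' (e - k%:Z) else 0%N) + G (c - 1) m u (e + 1))%N
  else 0%N.
Proof.
rewrite /G /= count_cat !count_map'.
case: ifP => Hc.
  congr (_ + _)%N.
    case: u => [|u].
      by apply: count_pred0' => s; rewrite /= /Pc /= andbF.
    apply: eq_count => s; rewrite /= /Pc /= Hc height_cons /= eq_addl.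
    by rewrite add1n eqSS.
  apply: eq_count => s; rewrite /= /Pc /= Hc height_cons /= eq_addl.
  by rewrite add0n opprK.
by rewrite !count_pred0' // => s; rewrite /= /Pc /= Hc.
Qed.

Lemma Glast c m u e : G c m.+1 u e =
  if 0 <= c + e then
    ((if u is u'.+1 then G c m u' (e - k%:Z) else 0%N) + G c m u (e + 1))%N
  else 0%N.
Proof.
rewrite /G; have /permP -> := perm_rall m.
rewrite /rallseqs count_cat !count_map'.
have Hr u0 b s : Pc c u0 e (rcons s b) =
   [&& dyckr c s, 0 <= c + e, (count id s + b == u0)%N & height k s + stp b == e].
  rewrite /Pc dyckr_rcons height_rcons -cats1 count_cat /= addn0.
  case: (height k s + stp b =P e) => [->|_]; last by rewrite !andbF.
  by rewrite !andbT andbA.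
case: ifP => Hc.
  congr (_ + _)%N.
    case: u => [|u].
      by apply: count_pred0' => s; rewrite /= Hr addn1 /= !andbF.
    apply: (@eq_count (seq bool)) => s; rewrite /= Hr Hc eq_addr addn1 eqSS /Pc.
    by rewrite andbA.
  apply: (@eq_count (seq bool)) => s; rewrite /= Hr Hc eq_addr addn0 /Pc opprK.
  by rewrite andbA.
by rewrite !count_pred0' // => s; rewrite /= Hr Hc andbF.
Qed.

Lemma G_cneg c m u e : c < 0 -> G c m u e = 0%N.
Proof.
move=> Hc; case: m => [|m]; first by rewrite G0 leNgt Hc.
by rewrite Gfirst leNgt Hc.
Qed.

Lemma G_eneg c m u e : c + e < 0 -> G c m u e = 0%N.
Proof.
move=> Hc; case: m => [|m]; last by rewrite Glast leNgt Hc.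
rewrite G0; case: (e =P 0) => [E|]; last by rewrite !andbF.
by move: Hc; rewrite E addr0 => Hc; rewrite leNgt Hc.
Qed.

Lemma G_supp m : forall c u e, G c m u e != 0%N -> m%:Z + e = (k.+1 * u)%N%:Z.
Proof.
elim: m => [|m IH] c u e.
  rewrite G0; case: u => [|u]; last by rewrite !andbF.
  by case: (e =P 0) => [->|]; rewrite ?andbF // muln0 addr0.
rewrite Gfirst; case: ifP => // _.
case: u => [|u].
  by rewrite add0n => /IH; rewrite muln0 => H; lia.
case: (G (c + k%:Z) m u (e - k%:Z) =P 0%N) => [->|/eqP/IH H].
  by rewrite add0n => /IH; lia.
by move=> _; rewrite mulnS PoszD -H; lia.
Qed.

Definition F (N u : nat) : int :=
  'C(N, u)%:Z - (k.+1 * (if u is u'.+1 then 'C(N.-1, u') else 0))%N%:Z.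

Definition fb u h := F (k.+1 * u + h).+1 u.

Lemma binS' L u : 'C(L.+1, u) = ('C(L, u) + (if u is u'.+1 then 'C(L, u') else 0))%N.
Proof. by case: u => [|u]; rewrite ?bin0 ?addn0 // binS addnC. Qed.

Lemma fb_rec u h : fb u.+1 h = fb u (h + k) + (if h is h'.+1 then fb u.+1 h' else 0).
Proof.
rewrite /fb /F; case: h => [|h].
  set L := (k.+1 * u.+1)%N.
  have -> : (k.+1 * u + (0 + k))%N.+1 = L by rewrite /L mulnS; lia.
  have -> : (k.+1 * u.+1 + 0)%N.+1 = L.+1 by rewrite addn0.
  have HL : L = (L.-1).+1 by rewrite /L mulSn.
  have D := mul_bin_diag L u.
  have E1 : 'C(L.+1, u.+1) = ('C(L, u.+1) + 'C(L, u))%N by rewrite binS.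
  have E2 := binS' L.-1 u; rewrite -HL in E2.
  have D' : 'C(L, u.+1) = (k.+1 * 'C(L.-1, u))%N.
    apply/eqP; rewrite -(eqn_pmul2l (ltn0Sn u)) -D {1}/L; apply/eqP; ring.
  rewrite /= E1 E2 D' !PoszD !PoszM; ring.
set M := (k.+1 * u.+1 + h)%N.
have -> : (k.+1 * u.+1 + h.+1).+1 = M.+2 by rewrite /M addnS.
have -> : (k.+1 * u + (h.+1 + k)).+1 = M.+1 by rewrite /M mulnS; lia.
have E1 : 'C(M.+2, u.+1) = ('C(M.+1, u.+1) + 'C(M.+1, u))%N by rewrite binS.
have E2 := binS' M u.
rewrite /= E1 E2 !PoszD !PoszM; ring.
Qed.

Lemma fb0 h : fb 0 h = 1.
Proof. by rewrite /fb /F bin0 muln0 subr0. Qed.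

Lemma G_barrier m : forall (h u : nat),
  (G h%:Z m u (- h%:Z))%:Z = if m == (k.+1 * u + h)%N then fb u h else 0.
Proof.
elim: m => [|m IH] h u.
  by rewrite G0; case: u => [|u]; case: h => [|h] //=; rewrite muln0 ?fb0.
rewrite Gfirst /=.
have E1 (x : nat) : x.+1%:Z - 1 = x%:Z by lia.
have E2 (x : nat) : - x.+1%:Z + 1 = - x%:Z by lia.
have E3 (x : nat) : x%:Z + k%:Z = (x + k)%N%:Z by lia.
have E4 (x : nat) : - x%:Z - k%:Z = - (x + k)%N%:Z by lia.
case: u => [|u]; case: h => [|h].
- by rewrite [G (_ - 1) _ _ _]G_cneg // muln0.
- rewrite add0n E1 E2 IH !muln0 !add0n eqSS.
  by case: (m == h); rewrite ?fb0.
- rewrite [G (_ - 1) _ _ _]G_cneg // addn0 E3 E4 IH addn0 add0n.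
  have -> : (m.+1 == k.+1 * u.+1)%N = (m == k.+1 * u + k)%N.
    by apply/eqP/eqP; rewrite mulnS; lia.
  by case: ifP => //; rewrite fb_rec addr0.
- rewrite PoszD E3 E4 E1 E2 !IH.
  have -> : (m == k.+1 * u + (h.+1 + k))%N = (m.+1 == k.+1 * u.+1 + h.+1)%N.
    by apply/eqP/eqP; rewrite mulnS; lia.
  have -> : (m == k.+1 * u.+1 + h)%N = (m.+1 == k.+1 * u.+1 + h.+1)%N.
    by apply/eqP/eqP; lia.
  by case: ifP => _; rewrite ?addr0 // (fb_rec u h.+1).
Qed.

Definition a u e : nat := (\sum_(0 <= m < (k.+1 * u).+1) G 0 m u e)%N.

Lemma G_big m u e : ((k.+1 * u).+1 <= m)%N -> G 0 m u e = 0%N.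
Proof.
move=> Hm; case: (ltrP e 0) => He; first by apply: G_eneg; rewrite add0r.
apply/eqP; apply/negP => /negP /G_supp H; lia.
Qed.

Lemma a_ext B u e : ((k.+1 * u).+1 <= B)%N -> (\sum_(0 <= m < B) G 0 m u e)%N = a u e.
Proof.
move=> HB; rewrite (big_cat_nat (leq0n _) HB) /= -[RHS]addn0; congr (_ + _)%N.
rewrite big_nat_cond big1 // => m /andP [/andP [Hm _] _].
by apply: G_big.
Qed.

Lemma a_neg u e : e < 0 -> a u e = 0%N.
Proof. by move=> He; rewrite /a big1 // => m _; apply: G_eneg; rewrite add0r. Qed.

Lemma a_0e e : a 0 e = (e == 0) :> nat.
Proof. by rewrite /a muln0 big_nat1 G0. Qed.

Lemma a_rec u e : 0 <= e -> a u.+1 e = (a u.+1 (e + 1) + a u (e - k%:Z))%N.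
Proof.
move=> He.
rewrite -(a_ext (k.+1 * u.+1).+2 u.+1 e) // big_nat_recl // G0 andbF.
rewrite [(false + _)%N]/=.
rewrite add0n.
under eq_bigr => m _ do rewrite Glast add0r He.
rewrite big_split /= addnC; congr (_ + _)%N; apply: a_ext => //.
by rewrite mulnS; lia.
Qed.

Lemma a_u0 u : (a u 0)%:Z = fb u 0.
Proof.
rewrite /a big_nat_recr //= big1_seq ?add0n.
  by have := G_barrier (k.+1 * u) 0 u; rewrite oppr0 addn0 eqxx.
move=> m /andP [_]; rewrite mem_iota add0n => /= Hm.
apply/eqP; apply/negP => /negP /G_supp H; lia.
Qed.

Lemma good_eq n j : num_good_paths k n j = a n j%:Z.
Proof.
rewrite /num_good_paths.
under eq_bigr => m _ do rewrite card_tuples.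
rewrite -(big_mkord (fun _ => true) (fun m => count (good_path k n j) (allseqs m))).
rewrite big_nat_recl //.
have -> : count (good_path k n j) (allseqs 0) = 0%N by rewrite /= /good_path /= !andbF.
rewrite add0n.
rewrite -(a_ext (k.+1 * n.+1) n j%:Z); last by rewrite mulnS; lia.
apply: eq_bigr => m _.
have /permP -> := perm_rall m.
rewrite /rallseqs count_cat !count_map' /G.
rewrite (@count_pred0' _ (fun x => good_path k n j (rcons x false))); last first.
  by move=> s; rewrite /good_path last_rcons /= !andbF.
rewrite addn0; apply: (@eq_count (seq bool)) => s.
rewrite /good_path /Pc dyck_prefixE dyckr_rcons height_rcons last_rcons.
rewrite -cats1 count_cat /= addn1 eqSS add0r PoszD eq_addr addrK.
case: (height k s =P j%:Z) => [->|_]; last by rewrite !andbF.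
by rewrite andbT -andbA; congr (_ && _); rewrite andbC.
Qed.

End Comb.
Section Alg.
Variable k : nat.
Hypothesis hk : (1 <= k)%N.

Lemma binz_negb a b : b < 0 -> binz a b = 0.
Proof. by rewrite /binz => ->. Qed.

Lemma binz_nega a b : a < 0 -> binz a b = 0.
Proof. by rewrite /binz => ->; case: ifP. Qed.

Lemma binz_nat (a b : nat) : binz a b = 'C(a, b)%:R.
Proof. by []. Qed.

Lemma binz_0 a : binz a 0 = (0 <= a)%R%:R.
Proof. by case: a => [a|a] //=; rewrite binz_nat bin0. Qed.

Lemma binz_pascal (a : int) (m : nat) : binz (a + 1) m.+1 = binz a m.+1 + binz a m.
Proof.
case: a => [a|[|a]].
- by rewrite -PoszD addn1 !binz_nat binS natrD addrC.
- by rewrite binz_nat !binz_nega ?addr0 // bin0n.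
- rewrite !binz_nega ?addr0 //; rewrite NegzE; lia.
Qed.

Definition cq (i : nat) : rat := (fb k i 0)%:~R.

Definition S n (j : int) : rat :=
  \sum_(0 <= m < n.+1) (-1) ^+ m * binz (j - (k * m)%N%:Z) m%:Z * cq (n - m).
Definition T n (j : int) : rat := (-1) ^+ n * binz (j - 1 - (k * n)%N%:Z) n%:Z.
Definition R n j := S n j - T n j.

Lemma S_rec n (j : int) : 0 <= j -> S n.+1 (j + 1) = S n.+1 j - S n (j - k%:Z).
Proof.
move=> hj; rewrite /S big_nat_recl // [X in _ = X - _]big_nat_recl //.
rewrite !muln0 !subr0 !binz_0 hj (_ : 0 <= j + 1) ?addr_ge0 //.
rewrite -[RHS]addrA; congr (_ + _); rewrite -sumrB; apply: eq_bigr => i _.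
rewrite subSS.
have -> : j + 1 - (k * i.+1)%N%:Z = (j - (k * i.+1)%N%:Z) + 1 by lia.
have -> : j - k%:Z - (k * i)%N%:Z = (j - (k * i.+1)%N%:Z) by rewrite mulnS PoszD; lia.
rewrite binz_pascal exprS; ring.
Qed.

Lemma T_rec n (j : int) : T n.+1 (j + 1) = T n.+1 j - T n (j - k%:Z).
Proof.
rewrite /T.
have -> : j + 1 - 1 - (k * n.+1)%N%:Z = (j - 1 - (k * n.+1)%N%:Z) + 1 by lia.
have -> : j - k%:Z - 1 - (k * n)%N%:Z = (j - 1 - (k * n.+1)%N%:Z) by rewrite mulnS PoszD; lia.
rewrite binz_pascal exprS; ring.
Qed.

Lemma R_rec n (j : int) : 0 <= j -> R n.+1 (j + 1) = R n.+1 j - R n (j - k%:Z).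
Proof. by move=> hj; rewrite /R S_rec // T_rec; ring. Qed.

Lemma R_neg n (j : int) : j < 0 -> R n j = 0.
Proof.
move=> hj; rewrite /R /T binz_nega ?mulr0 ?subr0; last by lia.
rewrite /S big1 // => m _; rewrite binz_nega ?mulr0 ?mul0r //; lia.
Qed.

Lemma cq0 : cq 0 = 1.
Proof. by rewrite /cq fb0. Qed.

Lemma R_0 (j : int) : 0 <= j -> R 0 j = (j == 0)%R%:R.
Proof.
move=> hj; rewrite /R /S /T big_nat1 !expr0 !mul1r muln0 !subr0 subn0 cq0 mulr1.
rewrite !binz_0 hj; case: j hj => [[|j]|j] //= _.
Qed.

Lemma R_j0 n : R n 0 = cq n.
Proof.
rewrite /R /S /T big_nat_recl // muln0 subr0 binz_0 expr0 mul1r mul1r subn0.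
rewrite big1 ?addr0; last first.
  by move=> i _; rewrite binz_nega ?mulr0 ?mul0r //; lia.
by rewrite binz_nega ?mulr0 ?subr0 //; lia.
Qed.

Lemma aR n (j : int) : ((a k n j)%:R : rat) = R n j.
Proof.
elim: n j => [|n IHn] j.
  case: (ltrP j 0) => hj; first by rewrite a_neg // R_neg.
  by rewrite a_0e R_0.
case: (ltrP j 0) => hj; first by rewrite a_neg // R_neg.
case: j hj => // j _.
elim: j => [|j IHj].
  by rewrite R_j0 /cq -a_u0.
have -> : j.+1%:Z = j%:Z + 1 by lia.
rewrite R_rec // -IHj -IHn.
have := a_rec k n (j%:Z) (isT : (0 <= j%:Z)%R) => /(congr1 (fun x : nat => (x%:R : rat))).
rewrite natrD => ->; ring.
Qed.

End Alg.

Lemma cq_eq k (d : nat) :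
  ('C((k.+1 * d).+1, d))%:Z = ((k.+1 * d).+1)%:Z * fb k d 0.
Proof.
rewrite /fb /F addn0.
case: d => [|d]; first by rewrite muln0 bin0 mul1r subr0.
set N := (k.+1 * d.+1).+1.
have D := mul_bin_diag N d.
have D' : (N%:Z * 'C(N.-1, d)%:Z) = d.+1%:Z * 'C(N, d.+1)%:Z by rewrite -!PoszM D.
rewrite PoszM mulrBr mulrCA D' /N.
rewrite -/N; have -> : N%:Z = k.+1%:Z * d.+1%:Z + 1 by rewrite /N; lia.
ring.
Qed.

Lemma term_conv k (n m : nat) :
  (1 + (n%:Z - m%:Z) * (k.+1)%:Z)%:~R^-1 * binz (1 + (n%:Z - m%:Z) * (k.+1)%:Z) (n%:Z - m%:Z)
  = if (m <= n)%N then cq k (n - m) else 0 :> rat.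
Proof.
case: leqP => Hmn; last by rewrite binz_negb ?mulr0 //; lia.
have -> : n%:Z - m%:Z = (n - m)%N%:Z by lia.
have -> : 1 + (n - m)%N%:Z * k.+1%:Z = ((k.+1 * (n - m)).+1)%N%:Z by lia.
rewrite binz_nat /cq.
have HN : (((k.+1 * (n - m)).+1)%N%:Z%:~R : rat) != 0 by rewrite intr_eq0.
apply: (mulfI HN); rewrite mulrA mulfV // mul1r.
by rewrite -intrM -cq_eq.
Qed.

Lemma sum_ext_half (F : nat -> rat) A B : (A <= B)%N ->
  (forall m, (A <= m)%N -> F m = 0) ->
  \sum_(0 <= m < A) F m = \sum_(0 <= m < B) F m.
Proof.
move=> AB HA; rewrite (big_cat_nat (leq0n _) AB) /= [X in _ = _ + X]big_nat_cond.
rewrite [X in _ = _ + X]big1 ?addr0 // => m /andP [/andP [Hm _] _]; exact: HA.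
Qed.

Lemma sum_ext (F : nat -> rat) A B :
  (forall m, (A <= m)%N -> F m = 0) -> (forall m, (B <= m)%N -> F m = 0) ->
  \sum_(0 <= m < A) F m = \sum_(0 <= m < B) F m.
Proof.
move=> HA HB; case: (leqP A B) => AB; first exact: sum_ext_half.
by rewrite (@sum_ext_half F B A (ltnW AB) HB).
Qed.

Theorem mainTheorem3 (k n j : nat) (hk : (1 <= k)%N) :
  (num_good_paths k n j)%:R =
    \sum_(0 <= m < (j %/ k).+1)
       (-1) ^+ m * binz (j%:Z - (k * m)%:Z) m%:Z
       * (1 + (n%:Z - m%:Z) * (k.+1)%:Z)%:~R^-1
       * binz (1 + (n%:Z - m%:Z) * (k.+1)%:Z) (n%:Z - m%:Z)
    - (-1) ^+ n * binz (j%:Z - 1 - (k * n)%:Z) n%:Z :> rat.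
Proof.
rewrite good_eq (@aR k hk) /R /S /T; congr (_ - _).
under [RHS]eq_bigr => m _ do rewrite -mulrA term_conv.
rewrite (@eq_big_nat _ _ _ 0 n.+1 _
  (fun m => (-1) ^+ m * binz (j%:Z - (k * m)%:Z) m%:Z * (if (m <= n)%N then cq k (n - m) else 0))); last first.
  by move=> m /andP [_ Hm]; rewrite ltnS in Hm; rewrite Hm.
apply: sum_ext => m Hm.
  by rewrite leqNgt Hm /= mulr0.
rewrite binz_nega ?mulr0 ?mul0r //.
have : (j < k * m)%N.
  apply: (leq_trans _ (leq_mul (leqnn k) Hm)).
  by rewrite mulnC ltn_ceil.
lia.
Qed.
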